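(* Let $M$ be an $\widehat{\mathrm{FI}}$-module such that $\Sigma^NM$ has generation degree $\le d$. Then $M$ has generation degree $\le d+N$.
   Context: $\widehat{\mathrm S}_n=\{(\sigma,d)\in\mathrm S_n\times\mathbb Z: d\text{ odd}\iff\operatorname{sgn}\sigma=-1\}$ ($n\ge2$; trivial for $n=0,1$). $\widehat{\mathrm{FI}}$: objects $n\in\mathbb N$, $\widehat{\mathrm{FI}}(n,m)=\widehat{\mathrm S}_m/i_2(\widehat{\mathrm S}_{m-n})$ ($i_1,i_2$ inclusions on first/last letters), composition $([s],[t])\mapsto[t\,i_1(s)]$, with monoidal structure $n\oplus m=n+m$ defined on morphisms via $i_1,i_2$ and a braiding from $\mathrm{Br}_n\to\widehat{\mathrm S}_n$, $\sigma_{i,i+1}\mapsto((i\ i{+}1),1)$. $\Sigma M$ is the restriction of $M$ along $-\oplus 1$, $(\Sigma M)_n=M_{n+1}$. Generation degree $\le d$: $M$ is a quotient of $\mathbf I(W)$, $\mathbf I(W)_m=\bigoplus_{n\le m}\mathbb Z[\widehat{\mathrm{FI}}(n,m)]\otimes_{\mathbb Z\widehat{\mathrm S}_n}W_n$, with $W_n=0$ for $n>d$. *)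

(* Defs.v *)
From HB Require Import structures.
From mathcomp Require Import all_boot all_order fingroup perm ssralg ssrnum ssrint.
Set Implicit Arguments. Unset Strict Implicit. Unset Printing Implicit Defensive.
Import GRing.Theory.
Local Open Scope ring_scope.

(** * The groups \hat S_n, represented inside {perm 'I_n} * int.
    (s, d) \in \hat S_m  iff  (m <= 1 and d = 0)  or  (m >= 2 and d odd <-> s odd).
    For m <= 1, 'S_m is trivial, so this is the trivial group, as in the paper.
    Group law (paper convention, permutations composed as functions):
      (s,d).(t,e) = (s o t, d + e), which in MathComp notation is ((t * s)%g, d + e). *)
Definition inS (m : nat) (s : {perm 'I_m}) (d : int) : bool :=
  if (m <= 1)%N then d == 0 else odd (absz d) == odd_perm s.

(** nat-level view of a permutation of 'I_n (identity outside [0,n)). *)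
Definition sfun n (s : {perm 'I_n}) (j : nat) : nat :=
  match @insub nat (fun j => j < n)%N _ j with Some i => val (s i) | None => j end.

(** Permutation of 'I_m induced by a nat function (if it restricts to an
    injection of 'I_m; otherwise the identity -- never used in that case). *)
Definition natperm (m : nat) (f : nat -> nat) : {perm 'I_m} :=
  let g := fun i : 'I_m => (insubd i (f i) : 'I_m) in
  (if injectiveb g as b return (injectiveb g = b -> {perm 'I_m})
   then fun H => perm (elimT (@injectiveP _ _ g) H)
   else fun _ => 1%g) erefl.

Definition i1 n m (s : {perm 'I_n}) : {perm 'I_m} := natperm m (sfun s).

(** i_2 : S_k -> S_m, inclusion on the last k letters (k <= m). *)
Definition i2 k m (u : {perm 'I_k}) : {perm 'I_m} :=
  natperm m (fun j => if (m - k <= j)%N then (m - k + sfun u (j - (m - k)))%N else j).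

(** A morphism n -> m (n <= m) of \hat{FI} is a coset [(s,d)] in
    \hat S_m / i_2(\hat S_{m-n}).  A functor out of \hat{FI} is given by its
    values on representatives, invariant under the coset relation.  *)
Record FIdata := {
  Mobj : nat -> zmodType;
  Mact : forall n m : nat, {perm 'I_m} -> int -> Mobj n -> Mobj m }.
Arguments Mobj : clear implicits.
Arguments Mact : clear implicits.

Definition isFIhatMod (M : FIdata) : Prop :=
  (forall n m s d x y, (n <= m)%N -> inS s d ->
      Mact M n m s d (x - y) = Mact M n m s d x - Mact M n m s d y) /\
  (* well defined on cosets  [s] = [s . i_2(u)] *)
  (forall n m s d u e x, (n <= m)%N -> inS s d -> @inS (m - n) u e ->
      Mact M n m ((i2 m u * s)%g) (d + e) x = Mact M n m s d x) /\
  (forall n x, Mact M n n 1%g 0 x = x) /\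
  (* composition ([s],[t]) |-> [t i_1(s)] *)
  (forall n m l s d t e x, (n <= m)%N -> (m <= l)%N -> inS s d -> inS t e ->
      Mact M m l t e (Mact M n m s d x) = Mact M n l ((i1 l s * t)%g) (e + d) x).

(** * The shift functor Sigma: restriction along - (+) 1.
    For f = [(s,d)] : n -> m, f (+) id_1 = [ i_1(s) . (id_n (+) b) ] where
    b in \hat S_{m-n+1} is the image of the braiding moving one strand past
    m-n strands, i.e. the product of the m-n generators ((i i+1),1):
    the cycle n |-> m, j |-> j-1 (n < j <= m), with integer part m-n. *)
Definition shiftcyc n m : {perm 'I_m.+1} :=
  natperm m.+1 (fun j => if j == n then m
                         else if (n < j <= m)%N then j.-1 else j).

Definition Sigma (M : FIdata) : FIdata := {|
  Mobj := fun n => Mobj M n.+1;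
  Mact := fun n m s d =>
    Mact M n.+1 m.+1 ((shiftcyc n m * i1 m.+1 s)%g) (d + (m - n)%N%:Z) |}.

(** * Generation degree: M_m is generated, as an abelian group, by the images
    M(f)(y) with f : n -> m, n <= d, y in M_n (i.e. M is a quotient of
    I(W) with W concentrated in degrees <= d). *)
Inductive span (M : FIdata) (d m : nat) : Mobj M m -> Prop :=
| span_gen n s e (y : Mobj M n) :
    (n <= d)%N -> (n <= m)%N -> inS s e -> @span M d m (Mact M n m s e y)
| span_zero : @span M d m 0
| span_sub x y : @span M d m x -> @span M d m y -> @span M d m (x - y).

Definition genDegLe (M : FIdata) (d : nat) : Prop :=
  forall m (x : Mobj M m), @span M d m x.

(* Main.v *)
Require Import Defs.
From mathcomp Require Import all_boot all_order fingroup perm ssralg ssrnum ssrint zify.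
Set Implicit Arguments. Unset Strict Implicit. Unset Printing Implicit Defensive.
Import GRing.Theory.

Lemma odd_absz1 (z : int) : odd (absz (z + 1)%R) = ~~ odd (absz z).
Proof.
case: z => a.
  have -> : (Posz a + 1 = Posz a.+1)%R by rewrite -addn1 PoszD.
  by [].
rewrite NegzE.
have -> : (- (Posz a.+1) + 1 = - (Posz a))%R.
  by rewrite -addn1 PoszD opprD addrK.
by rewrite abszN /= negbK.
Qed.

Lemma odd_abszD (z : int) k : odd (absz (z + k%:Z)%R) = odd (absz z) (+) odd k.
Proof.
elim: k => [|k IH]; first by rewrite addr0 addbF.
rewrite -addn1 PoszD addrA odd_absz1 IH oddD /=.
by case: (odd (absz z)); case: (odd k).
Qed.

Lemma dep_if_true T (b : bool) (H : b = true) (P : b = true -> T) Q :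
  (if b as c return b = c -> T then P else Q) erefl = P H.
Proof.
destruct b; last by [].
by rewrite (eq_irrelevance H erefl).
Qed.

Lemma natpermE m (f : nat -> nat) :
  (forall i : 'I_m, (f i < m)%N) ->
  (forall i j : 'I_m, f i = f j -> i = j) ->
  forall i : 'I_m, val (natperm m f i) = f i.
Proof.
move=> Hb Hi.
rewrite /natperm.
set g := fun i : 'I_m => _.
have gE : forall i, val (g i) = f i by move=> i; rewrite /g val_insubd Hb.
have Hg : injectiveb g.
  by apply/injectiveP => i j /(congr1 val); rewrite !gE => /Hi.
move=> i; rewrite (dep_if_true Hg) permE; exact: gE.
Qed.

Lemma sfun_lt k (s : {perm 'I_k}) (i : 'I_k) : sfun s i = s i.
Proof.
rewrite /sfun; case: insubP => [u _ Hu|]; last by rewrite ltn_ord.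
by congr (val (s _)); apply: val_inj.
Qed.

Lemma sfun_ge k (s : {perm 'I_k}) j : (k <= j)%N -> sfun s j = j.
Proof. by move=> H; rewrite /sfun insubF // ltnNge H. Qed.

Lemma sfun_bound k (s : {perm 'I_k}) (j : 'I_k.+1) : (sfun s j < k.+1)%N.
Proof.
case: (ltnP j k) => H.
  by rewrite (sfun_lt s (Ordinal H)) /= ltnS; apply: ltnW.
by rewrite sfun_ge.
Qed.

Lemma sfun_inj k (s : {perm 'I_k}) (a b : 'I_k.+1) : sfun s a = sfun s b -> a = b.
Proof.
case: (ltnP a k) => Ha; case: (ltnP b k) => Hb.
+ rewrite (sfun_lt s (Ordinal Ha)) (sfun_lt s (Ordinal Hb)) => /val_inj/perm_inj.
  by move/(congr1 val) => /= E; apply: val_inj.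
+ rewrite (sfun_lt s (Ordinal Ha)) (sfun_ge s Hb) => E.
  by have := ltn_ord (s (Ordinal Ha)); rewrite E ltnNge Hb.
+ rewrite (sfun_lt s (Ordinal Hb)) (sfun_ge s Ha) => E.
  by have := ltn_ord (s (Ordinal Hb)); rewrite -E ltnNge Ha.
+ by rewrite !sfun_ge // => E; apply: val_inj.
Qed.

Lemma i1S_val k (s : {perm 'I_k}) (i : 'I_k.+1) : val (i1 k.+1 s i) = sfun s i.
Proof. exact: natpermE (@sfun_bound k s) (@sfun_inj k s) i. Qed.

Lemma i1S k (s : {perm 'I_k}) : i1 k.+1 s = lift_perm ord_max ord_max s.
Proof.
apply/permP => i; apply: val_inj; rewrite i1S_val.
case: (unliftP ord_max i) => [j ->|->].
  by rewrite lift_perm_lift /= /bump !(leqNgt k) !ltn_ord /= !add0n sfun_lt.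
by rewrite permE /lift_perm_fun unlift_none sfun_ge.
Qed.

Lemma odd_i1S k (s : {perm 'I_k}) : odd_perm (i1 k.+1 s) = odd_perm s.
Proof. by rewrite i1S odd_lift_perm addbb. Qed.

Lemma sc_val n m (i : 'I_m.+1) : val (shiftcyc n m i) =
  (if i == n :> nat then m else if (n < i <= m)%N then i.-1 else i).
Proof.
apply: natpermE.
  move=> j; have := ltn_ord j; case: ifP => H1; first lia.
  case: ifP => H2; lia.
move=> a b; have := ltn_ord a; have := ltn_ord b.
move=> Hb Ha E; apply: ord_inj; move: E; repeat (case: ifP => ?); lia.
Qed.

Lemma shiftcyc_nn n : shiftcyc n n = 1%g.
Proof.
apply/permP => i; apply: ord_inj; rewrite sc_val perm1; have := ltn_ord i.
repeat (case: ifP => ?); lia.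
Qed.

Lemma shiftcyc_S n m : (n <= m)%N ->
  shiftcyc n m.+1 = (i1 m.+2 (shiftcyc n m) * tperm (inord m) (inord m.+1))%g.
Proof.
move=> Hnm; apply/permP => i; apply: ord_inj; rewrite permM.
set x := i1 m.+2 (shiftcyc n m) i.
have Hx : nat_of_ord x = (if (i < m.+1)%N then
   (if i == n :> nat then m else if (n < i <= m)%N then i.-1 else i) else i).
  rewrite /x i1S_val; case: ltnP => H.
    by rewrite (sfun_lt _ (Ordinal H)) sc_val.
  by rewrite sfun_ge.
have Hi := ltn_ord i.
rewrite sc_val; case: tpermP => [/(congr1 val)|/(congr1 val)|N1 N2].
- rewrite /= !inordK // => E; move: E; rewrite Hx; repeat (case: ifP => ?); lia.
- rewrite /= !inordK // => E; move: E; rewrite Hx; repeat (case: ifP => ?); lia.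
- have N1' : nat_of_ord x <> m.
    by move=> E; apply: N1; apply: ord_inj; rewrite inordK // E.
  have N2' : nat_of_ord x <> m.+1.
    by move=> E; apply: N2; apply: ord_inj; rewrite inordK // E.
  move: N1' N2'; rewrite Hx; repeat (case: ifP => ?); lia.
Qed.

Lemma odd_shiftcyc n m : (n <= m)%N -> odd_perm (shiftcyc n m) = odd (m - n).
Proof.
move=> H; elim: m H => [|m IH].
  by rewrite leqn0 => /eqP ->; rewrite shiftcyc_nn odd_perm1.
rewrite leq_eqVlt => /orP [/eqP <-|H]; first by rewrite subnn shiftcyc_nn odd_perm1.
rewrite shiftcyc_S // odd_permM odd_i1S IH // odd_tperm.
have -> : (inord m != inord m.+1 :> 'I_m.+2).
  by apply/eqP => /(congr1 (@nat_of_ord _)); rewrite !inordK //; lia.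
by rewrite subSn // addbT.
Qed.

Lemma inS_sigma n m (s : {perm 'I_m}) e : (n <= m)%N -> inS s e ->
  inS ((shiftcyc n m * i1 m.+1 s)%g) (e + (m - n)%N%:Z)%R.
Proof.
move=> Hnm; rewrite /inS odd_permM odd_shiftcyc // odd_i1S odd_abszD.
case: m s Hnm => [|[|m]] s Hnm /=.
- by move/eqP => ->; rewrite sub0n.
- move/eqP => ->.
  have -> : s = 1%g.
    apply/permP => i; rewrite perm1; apply: ord_inj.
    by have := ltn_ord (s i); have := ltn_ord i; lia.
  by rewrite odd_perm1 addbF.
- by move/eqP => ->; rewrite addbC.
Qed.

Lemma step (M : FIdata) d : (forall x : Mobj M 0, Mact M 0 0 1%g 0%R x = x) ->
  genDegLe (Sigma M) d -> genDegLe M d.+1.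
Proof.
move=> Hid H [|m] x.
  by rewrite -(Hid x); apply: span_gen.
elim: (H m x) => [n s e y Hn Hnm Hs | | x1 y1 _ IH1 _ IH2].
- apply: span_gen; [lia | lia | exact: inS_sigma].
- exact: span_zero.
- exact: span_sub.
Qed.

Lemma aux N : forall (M : FIdata) d, (forall n x, Mact M n n 1%g 0%R x = x) ->
  genDegLe (iter N Sigma M) d -> genDegLe M (d + N).
Proof.
elim: N => [|N IH] M d Hid H; first by rewrite addn0.
rewrite iterSr in H.
have HS : forall n x, Mact (Sigma M) n n 1%g 0%R x = x.
  move=> n x /=; rewrite shiftcyc_nn mul1g i1S lift_perm1 subnn addr0; exact: Hid.
rewrite addnS; apply: step (Hid 0) _; exact: IH HS H.
Qed.

Theorem mainTheorem13 (M : FIdata) (N d : nat) :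
  isFIhatMod M -> genDegLe (iter N Sigma M) d -> genDegLe M (d + N).
Proof. by move=> [_ [_ [Hid _]]]; apply: aux. Qed.
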